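(* Let $X$ be a connected Hausdorff topological space and let $\mathbf{F}$ be an infinite-dimensional $1$-independent Banach space of continuous functions over $X$ such that every bounded linear operator on $\mathbf{F}$ is of the form $\lambda\,\mathrm{Id}+K$ with $\lambda\in\mathbb{C}$ and $K$ compact. Then every multiplier of $\mathbf{F}$ is a constant function.
   Context: A Banach space of continuous functions over $X$ is a linear subspace of the space $C(X)$ of continuous complex functions with a complete norm whose topology is stronger than the compact-open topology. It is $1$-independent if for each $x\in X$ some $f\in\mathbf{F}$ has $f(x)\ne0$. $\omega:X\to\mathbb{C}$ is a multiplier of $\mathbf{F}$ if $\omega f\in\mathbf{F}$ for all $f\in\mathbf{F}$ and $f\mapsto\omega f$ is bounded on $\mathbf{F}$. *)

(* Defs.v *)
From HB Require Import structures.
From mathcomp Require Import all_boot all_order all_algebra.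
From mathcomp Require Import all_classical all_reals all_analysis.
From mathcomp Require Export complex.

Set Implicit Arguments.
Unset Strict Implicit.
Unset Printing Implicit Defensive.

Import Order.TTheory GRing.Theory Num.Theory.
Local Open Scope classical_set_scope.
Local Open Scope ring_scope.

(* The complex numbers R[i] (R : realType) with their usual (modulus) norm,
   topology and structure of normed module over themselves. *)
HB.instance Definition _ (R : rcfType) := GRing.ComAlgebra.copy R[i] (R[i])^o.
HB.instance Definition _ (R : rcfType) := NormedModule.copy R[i] (R[i])^o.

(* A Banach space of continuous functions over X: the complex Banach space V
   (complete normed R[i]-module) is identified, through the injective linear
   map iota, with a linear subspace of C(X); the norm topology of V is
   stronger than the compact-open topology, i.e. iota is continuous from V
   into the space X -> R[i] equipped with the compact-open topology. *)
Definition banach_cfun (R : realType) (X : topologicalType)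
    (V : completeNormedModType R[i]) (iota : V -> X -> R[i]) : Prop :=
  [/\ injective iota,
      (forall (a : R[i]) (u v : V) (x : X),
          iota (a *: u + v) x = a * iota u x + iota v x),
      (forall v : V, continuous (iota v)) &
      continuous (iota : V -> {compact-open, X -> R[i]})].

Definition one_independent (R : realType) (X : topologicalType)
    (V : completeNormedModType R[i]) (iota : V -> X -> R[i]) : Prop :=
  forall x : X, exists v : V, iota v x != 0.

Definition finite_dimensional (R : realType) (V : completeNormedModType R[i])
  : Prop :=
  exists s : seq V, forall v : V,
    exists c : 'I_(size s) -> R[i], v = \sum_(i < size s) c i *: s`_i.

Definition bounded_op (R : realType) (V : completeNormedModType R[i])
    (T : V -> V) : Prop :=
  exists M : R[i], forall v : V, `|T v| <= M * `|v|.

Definition compact_op (R : realType) (V : completeNormedModType R[i])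
    (K : V -> V) : Prop :=
  precompact (K @` [set v : V | `|v| <= 1]).

Definition multiplier (R : realType) (X : topologicalType)
    (V : completeNormedModType R[i]) (iota : V -> X -> R[i])
    (omega : X -> R[i]) : Prop :=
  (forall v : V, exists w : V, iota w = (fun x => omega x * iota v x)) /\
  (exists M : R[i], forall v w : V,
      iota w = (fun x => omega x * iota v x) -> `|w| <= M * `|v|).

(* Main.v *)
Require Import Defs.
From HB Require Import structures.
From mathcomp Require Import all_boot all_order all_algebra.
From mathcomp Require Import all_classical all_reals all_analysis.
From mathcomp Require Import complex.
Import Order.TTheory GRing.Theory Num.Theory.
Local Open Scope classical_set_scope.
Local Open Scope ring_scope.
Local Open Scope complex_scope.
Local Open Scope ring_scope.
From mathcomp Require Import lra.
Lemma cnorm_real (R : realType) (z : R[i]) : 0 <= z -> (complex.Re z)%:C = z.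
Proof. by move=> z0; apply: RRe_real; exact: ger0_real. Qed.

Lemma almost_max (R : realType) (V : normedModType R[i]) (P : V -> Prop)
    (phi : V -> R[i]) (C : R[i]) :
  (forall a u, P u -> P (a *: u)) ->
  (forall a u, phi (a *: u) = a * phi u) ->
  (forall u, `|u| <= 1 -> `|phi u| <= C) ->
  (exists u0, P u0 /\ phi u0 != 0) ->
  exists v s, [/\ P v, `|v| <= 1, 0 < s, s < 2 * `|phi v| &
                forall u, P u -> `|phi u| <= s * `|u|].
Proof.
move=> PZ phiZ phiB [u0 [Pu0 phiu0]].
have phi0 : phi 0 = 0 by rewrite -(scale0r (0 : V)) phiZ mul0r.
have u0n0 : u0 != 0 by apply/eqP => u00; move: phiu0; rewrite u00 phi0 eqxx.
set S := [set complex.Re `|phi u| | u in [set u | P u /\ `|u| <= 1]].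
have nrm1 : forall u : V, u != 0 -> `|(`|u|^-1 *: u)| = 1.
  move=> u un0; rewrite normrZ normfV normr_id mulVf //.
  by rewrite normr_eq0.
have hS : has_sup S.
  rewrite /has_sup /has_ubound; split; first by exists (complex.Re `|phi (0 *: u0)|); exists (0 *: u0) => //;
    split; [exact: PZ | rewrite scale0r normr0 ler01].
  exists (complex.Re C) => _ [u [Pu u1] <-].
  by move: (phiB u u1); rewrite lecE => /andP[_].
have u0S : S (complex.Re `|phi (`|u0|^-1 *: u0)|).
  by exists (`|u0|^-1 *: u0) => //; split; [exact: PZ | rewrite nrm1].
have supgt0 : 0 < sup S.
  apply: (lt_le_trans _ (sup_upper_bound hS u0S)).
  have : 0 < `|phi (`|u0|^-1 *: u0)| by rewrite normr_gt0 phiZ mulf_neq0 // invr_eq0 normr_eq0.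
  by rewrite ltcE => /andP[_].
have [y [v [Pv v1] <-] hy] := sup_adherent (divr_gt0 supgt0 (ltr0n _ 2)) hS.
have c2 : (2 : R[i]) = (2 : R)%:C by have := rmorph_nat (real_complex R) 2; move=> <-.
exists v, (sup S)%:C; split => //.
- by rewrite ltcR.
- rewrite -(@cnorm_real _ _ (normr_ge0 (phi v))) c2 -rmorphM /= ltcR.
  move: hy; rewrite {1}(splitr (sup S)) addrK => hy.
  by rewrite -ltr_pdivrMl // mulrC.
move=> u Pu; have [->|un0] := eqVneq u 0.
  by rewrite phi0 !normr0 mulr0.
have : `|phi (`|u|^-1 *: u)| <= (sup S)%:C.
  rewrite -(@cnorm_real _ _ (normr_ge0 _)) lecR; apply: sup_upper_bound => //.
  by exists (`|u|^-1 *: u) => //; split; [exact: PZ | rewrite nrm1].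
rewrite phiZ normrM normfV normr_id mulrC -ler_pdivlMr ?normr_gt0 //.
by rewrite invrK.
by rewrite invr_gt0 normr_gt0.
Qed.
Lemma no_sep (R : realType) (V : normedModType R[i]) (A : set V)
    (u : nat -> V) (eps : R[i]) :
  precompact A -> 0 < eps -> (forall n, A (u n)) ->
  (forall n m, (n < m)%N -> eps <= `|u n - u m|) -> False.
Proof.
rewrite precompactE => cA e0 Au sep.
have e20 : 0 < eps / 2 by rewrite divr_gt0.
have Fc : (u @ \oo) (closure A).
  by apply: (@filterE _ \oo) => n /=; apply: subset_closure.
have [p [_ clp]] := cA (u @ \oo) _ Fc.
have Bp : nbhs p [set y | `|p - y| < eps / 2].
  by apply/nbhs_normP; exists (eps / 2).
have [y [[n ->] hn]] := clp [set y | exists k, y = u k] _ (@filterE _ \oo _ _ (fun k => ex_intro _ k erefl)) Bp.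
have Fn : (u @ \oo) [set y | exists2 k, (n < k)%N & y = u k].
  apply: (@filterS _ \oo _ [set k | (n < k)%N]); last exact: nbhs_infty_gt.
  by move=> k /= nk; exists k.
have [y' [[m nm ->] hm]] := clp _ _ Fn Bp.
have := sep n m nm.
have : `|u n - u m| < eps.
  rewrite (splitr eps); apply: (le_lt_trans _ (ltrD hn hm)).
  have -> : u n - u m = (p - u m) - (p - u n) by rewrite opprB (addrC (p - u m)) subrKA.
  by rewrite [X in _ <= X]addrC; exact: ler_normB.
by move=> /lt_le_trans H /H; rewrite ltxx.
Unshelve. all: by end_near.
Qed.
Lemma pick_seq (R : realType) (X : Type) (r : X -> R) (p q eps : R) :
  p < q -> (forall t, p <= t <= q -> exists x, r x = t) ->
  (forall t, p <= t <= q -> eps <= `|t|) ->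
  exists x : nat -> X, (forall n, eps <= `|r (x n)|) /\
     (forall j n, (j < n)%N -> r (x j) != r (x n)).
Proof.
move=> pq hI heps.
pose t (n : nat) := p + (q - p) / (n.+1)%:R.
have qp0 : 0 < q - p by rewrite subr_gt0.
have tin : forall n, p <= t n <= q.
  move=> n; apply/andP; split.
    by rewrite lerDl divr_ge0 // ltW.
  rewrite -lerBrDl ler_pdivrMr // ler_pMr //.
  by rewrite ler1n.
have [x hx] := choice (fun n => hI _ (tin n)).
exists x; split => [n|j n jn]; first by rewrite hx; exact: heps.
rewrite !hx /t (inj_eq (addrI p)) (inj_eq (mulfI (lt0r_neq0 qp0))).
rewrite (inj_eq (@invr_inj _)) eqr_nat eqSS.
by rewrite ltn_eqF.
Qed.

Lemma pick_seq2 (R : realType) (X : Type) (r : X -> R) (a b : X) :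
  is_interval [set r x | x in [set: X]] -> r a != r b ->
  exists (x : nat -> X) (eps : R), 0 < eps /\ (forall n, eps <= `|r (x n)|) /\
     (forall j n, (j < n)%N -> r (x j) != r (x n)).
Proof.
move=> hI neq.
wlog ab : a b neq / r a < r b.
  move=> H; have := neq; rewrite neq_lt => /orP[ab|ba]; first exact: (H a b).
  by apply: (H b a) => //; rewrite eq_sym.
have IVT : forall t, r a <= t <= r b -> exists x, r x = t.
  move=> t ht; have [x _ <-] := hI (r a) (r b) (ex_intro2 _ _ a I erefl)
    (ex_intro2 _ _ b I erefl) t ht.
  by exists x.
have [b0|b0] := ltP 0 (r b).
  have s1 : Num.max (r a) (r b / 2) < r b.
    rewrite gt_max ab /=; lra.
  have s2 : forall t, Num.max (r a) (r b / 2) <= t <= r b -> exists x, r x = t.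
    move=> t /andP[]; rewrite ge_max => /andP[h _ h']; apply: IVT.
    by rewrite h h'.
  have s3 : forall t, Num.max (r a) (r b / 2) <= t <= r b -> r b / 2 <= `|t|.
    move=> t /andP[]; rewrite ge_max => /andP[_ h _].
    apply: (le_trans h); exact: ler_norm.
  have [x [h1 h2]] := @pick_seq _ _ _ _ _ _ s1 s2 s3.
  by exists x, (r b / 2); split => //; rewrite divr_gt0.
have a0 : r a < 0 by apply: (lt_le_trans ab).
have s1 : r a < Num.min (r b) (r a / 2).
  rewrite lt_min ab /=; lra.
have s2 : forall t, r a <= t <= Num.min (r b) (r a / 2) -> exists x, r x = t.
  move=> t /andP[h]; rewrite le_min => /andP[h' _]; apply: IVT.
  by rewrite h h'.
have s3 : forall t, r a <= t <= Num.min (r b) (r a / 2) -> - (r a / 2) <= `|t|.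
  move=> t /andP[_]; rewrite le_min => /andP[_ h].
  rewrite -normrN; apply: le_trans (ler_norm _); by rewrite lerN2.
have [x [h1 h2]] := @pick_seq _ _ _ _ _ _ s1 s2 s3.
by exists x, (- (r a / 2)); split => //; lra.
Qed.
Lemma eval_cont (R : realType) (X : topologicalType)
    (V : completeNormedModType R[i]) (iota : V -> X -> R[i]) :
  continuous (iota : V -> {compact-open, X -> R[i]}) ->
  forall x, continuous (fun v => iota v x).
Proof.
move=> Hc x v B hB; have [ O [oO Ox] OB] := (eq_ind _ (fun P => P B) hB _ (nbhsE (iota v x))).
have := (@compact_open_cvgP X R[i] _ (iota v : {compact-open, X -> R[i]}) _).1 (Hc v) [set x] O (@compact_set1 _ x) oO.
move=> /(_ _) H.
have : (iota @ v) [set g : {compact-open, X -> R[i]} | g @` [set x] `<=` O].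
  by apply: H => _ [y yx <-]; rewrite yx.
rewrite nbhs_filterE.
apply: (@filterS V (nbhs v) _ (iota @^-1` [set g : {compact-open, X -> R[i]} | [set g y | y in [set x]] `<=` O])).
by move=> u /= gO; apply: OB; apply: gO; exists x.
Qed.



Lemma Re_cont (R : realType) (X : topologicalType) (h : X -> R[i]) (c : R[i]) :
  `|c| = 1 -> continuous h -> continuous (fun x => (complex.Re (h x * c) : R^o)).
Proof.
move=> c1 hc t; apply/cvgrPdist_lt => e e0.
have e0' : 0 < e%:C by rewrite ltcR.
have := hc t; move/cvgr_dist_lt => /(_ _ e0').
apply: filterS => y hy.
have : `|complex.Re ((h t - h y) * c)|%:C < e%:C.
  by apply: le_lt_trans (normc_ge_Re _) _; rewrite normrM c1 mulr1.
rewrite ltcR mulrBl.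
by case: (h t * c) => a1 b1; case: (h y * c) => a2 b2.
Qed.

Lemma omega_cont (R : realType) (X : topologicalType) (f : X -> R[i])
  (H : forall x, exists u v : X -> R[i], [/\ continuous u, continuous v, v x != 0 &
     forall y, f y * v y = u y]) : continuous f.
Proof.
move=> x; have [u [v [uc vc vx fuv]]] := H x.
have fx : f x = u x * (v x)^-1 by rewrite -fuv mulfK.
rewrite /continuous_at fx.
have cv : (fun y => u y * (v y)^-1) @ x --> u x * (v x)^-1.
  exact: (cvgM (uc x) (cvgV vx (vc x))).
apply: cvg_trans cv; apply: near_eq_cvg.
have : \forall y \near x, v y != 0.
  have vx0 : 0 < `|v x| by rewrite normr_gt0.
  have := vc x; move/cvgr_dist_lt => /(_ _ vx0).
  apply: filterS => y hy; apply/eqP => vy0; move: hy; rewrite vy0 subr0 ltxx.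
  done.
apply: filterS => y vy /=; by rewrite -fuv mulfK.
Qed.
Lemma range_interval (R : realType) (X : topologicalType) (r : X -> R^o) :
  connected [set: X] -> continuous r -> is_interval [set (r x : R) | x in [set: X]].
Proof.
move=> cX rc; apply/connected_intervalP.
exact: (connected_continuous_connected cX (continuous_subspaceT rc)).
Qed.
Theorem lemma4p3 (R : realType) (X : topologicalType)
    (V : completeNormedModType R[i]) (iota : V -> X -> R[i]) :
  connected [set: X] ->
  hausdorff_space X ->
  banach_cfun iota ->
  ~ finite_dimensional V ->
  one_independent iota ->
  (forall T : {linear V -> V}, bounded_op T ->
     exists (lambda : R[i]) (K : {linear V -> V}),
       compact_op K /\ forall v : V, T v = lambda *: v + K v) ->
  forall omega : X -> R[i], multiplier iota omega ->
  exists c : R[i], forall x : X, omega x = c.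
Proof.
move=> cX _ [iinj ilin icont icO] _ oneind Hop omega [Hm1 [M HM]].
have iD : forall u v x, iota (u + v) x = iota u x + iota v x.
  by move=> u v x; have := ilin 1 u v x; rewrite scale1r mul1r.
have i0 : forall x, iota 0 x = 0.
  move=> x; have h := ilin 1 0 0 x; rewrite scale1r addr0 mul1r in h.
  by apply: (addrI (iota 0 x)); rewrite addr0 -h.
have iZ : forall a u x, iota (a *: u) x = a * iota u x.
  by move=> a u x; have := ilin a u 0 x; rewrite addr0 i0 addr0.
have iB : forall u v x, iota (u - v) x = iota u x - iota v x.
  by move=> u v x; rewrite iD -scaleN1r iZ mulN1r.
have [T HT0] := choice Hm1.
have HT : forall v x, iota (T v) x = omega x * iota v x.
  by move=> v x; rewrite HT0.
have Tlin : linear T.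
  move=> a u v; apply: iinj; apply/funext => x.
  rewrite (HT (a *: u + v) x) !ilin (HT u x) (HT v x) mulrDr mulrCA.
  by [].
pose TL : {linear V -> V} := HB.pack T (GRing.isLinear.Build _ _ _ _ T Tlin).
have Tb : bounded_op TL by exists M => v; apply: HM; apply/funext => x; exact: HT.
have [lam [K [Kc HK]]] := Hop TL Tb.
pose g x := omega x - lam.
have HKg : forall v x, iota (K v) x = g x * iota v x.
  move=> v x; have -> : K v = T v - lam *: v.
    by have := HK v => /= ->; rewrite (addrC (lam *: v)) addrK.
  by rewrite iB HT iZ mulrBl.
have gcont : continuous g.
  apply: omega_cont => x.
  have [v vx] := oneind x.
  exists (iota (K v)), (iota v).
  split; [exact: icont | exact: icont | exact: vx | by move=> y; rewrite HKg].
case: (pselect (exists a b, omega a != omega b)) => [[a [b oab]]|H]; last first.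
  case: (pselect (exists x0 : X, True)) => [[x0 _]|H0].
    by exists (omega x0) => x; apply/eqP/negPn/negP => hne; apply: H; exists x, x0.
  by exists 0 => x; exfalso; apply: H0; exists x.
exfalso.
have gab : g a != g b.
  by apply: contra oab => /eqP h; apply/eqP; apply: (addIr (- lam)).
have [c [c1 rab]] : exists c : R[i], `|c| = 1 /\
    complex.Re (g a * c) != complex.Re (g b * c).
  case: (eqVneq (complex.Re (g a)) (complex.Re (g b))) => hre; last first.
    by exists 1; rewrite normr1 !mulr1.
  exists 'i%C; split; first by rewrite complexiE normCi.
  rewrite !ReiNIm eqr_opp; apply: contra gab => /eqP him; apply/eqP.
  by move: hre him; case: (g a) => ? ?; case: (g b) => ? ? /= -> ->.
pose r x := (complex.Re (g x * c) : R^o).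
have rc : continuous r := @Re_cont _ _ _ _ c1 gcont.
have hI := @range_interval _ _ _ cX rc.
have [xs [eps [eps0 [heps hdist]]]] := @pick_seq2 _ _ _ _ _ hI rab.
have gdist : forall j n, (j < n)%N -> g (xs j) != g (xs n).
  by move=> j n jn; apply: contra (hdist j n jn) => /eqP h; rewrite /r h.
have sepv : forall n k, (k <= n)%N -> exists u,
    (forall j, (j < k)%N -> iota u (xs j) = 0) /\ iota u (xs n) != 0.
  move=> n; elim => [_|k IH kn].
    by have [u hu] := oneind (xs n); exists u.
  have [u [hu1 hu2]] := IH (ltnW kn).
  exists (K u - g (xs k) *: u); split.
    move=> j; rewrite ltnS leq_eqVlt => /orP[/eqP ->|jk].
      by rewrite iB iZ HKg subrr.
    by rewrite iB iZ HKg hu1 // !mulr0 subrr.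
  rewrite iB iZ HKg -mulrBl mulf_neq0 // subr_eq0 eq_sym.
  exact: gdist.
have evb : forall x, exists C : R[i], forall u, `|u| <= 1 -> `|iota u x| <= C.
  move=> x; have := @eval_cont _ _ _ _ icO x 0.
  move=> /cvgr_dist_lt /(_ _ ltr01) /nbhs_norm0P [d d0 hd].
  have d2 : 0 < d / 2 by rewrite divr_gt0.
  exists (d / 2)^-1 => u u1.
  have := hd ((d / 2) *: u).
  rewrite /= i0 iZ sub0r normrN normrM (ger0_norm (ltW d2)) => /(_ _) h.
  have {}h : d / 2 * `|iota u x| < 1.
    apply: h; rewrite normrZ (ger0_norm (ltW d2)).
    apply: (le_lt_trans (ler_wpM2l (ltW d2) u1)); rewrite mulr1.
    by rewrite ltr_pdivrMr // ltr_pMr // ltr1n.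
  rewrite -(mulKf (lt0r_neq0 d2) `|iota u x|).
  by rewrite -[X in _ <= X]mulr1; apply: ler_wpM2l (ltW h); rewrite invr_ge0 ltW.
have hv : forall n, exists vs : V * R[i],
    [/\ (forall j, (j < n)%N -> iota vs.1 (xs j) = 0), `|vs.1| <= 1, 0 < vs.2,
       vs.2 < 2 * `|iota vs.1 (xs n)| &
       forall u, (forall j, (j < n)%N -> iota u (xs j) = 0) ->
         `|iota u (xs n)| <= vs.2 * `|u|].
  move=> n; have [C hC] := evb (xs n).
  have PZ : forall a0 u, (forall j, (j < n)%N -> iota u (xs j) = 0) ->
      (forall j, (j < n)%N -> iota (a0 *: u) (xs j) = 0).
    by move=> a0 u hu j jn; rewrite iZ hu // mulr0.
  have phiZ : forall a0 u, iota (a0 *: u) (xs n) = a0 * iota u (xs n).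
    by move=> a0 u; rewrite iZ.
  have ex0 : exists u0, (forall j, (j < n)%N -> iota u0 (xs j) = 0) /\
      iota u0 (xs n) != 0 by exact: sepv.
  have [v [s hvs]] := @almost_max _ _ _ _ _ PZ phiZ hC ex0.
  by exists (v, s).
have [vs hvs] := choice hv.
apply: (@no_sep _ _ (K @` [set v : V | `|v| <= 1]) (fun n => K (vs n).1)
   (eps%:C / 2) Kc).
- by rewrite divr_gt0 // ltcR.
- by move=> n; exists (vs n).1 => //; have [] := hvs n.
move=> n m nm.
have [Pn vn1 s0 s2 sb] := hvs n.
have [Pm _ _ _ _] := hvs m.
set w := K (vs n).1 - K (vs m).1.
have Pw : forall j, (j < n)%N -> iota w (xs j) = 0.
  move=> j jn; rewrite iB !HKg Pn // Pm ?(ltn_trans jn nm) //.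
  by rewrite !mulr0 subrr.
have wn : iota w (xs n) = g (xs n) * iota (vs n).1 (xs n).
  by rewrite iB !HKg (Pm n nm) mulr0 subr0.
have hb := sb w Pw; rewrite wn normrM in hb.
have geps : eps%:C <= `|g (xs n)|.
  have h2 := normc_ge_Re (g (xs n) * c); rewrite normrM c1 mulr1 in h2.
  by apply: le_trans h2; rewrite lecR; exact: heps.
have p0 : 0 < `|iota (vs n).1 (xs n)|.
  by have := lt_trans s0 s2; rewrite pmulr_rgt0.
have h3 : eps%:C * `|iota (vs n).1 (xs n)| <=
    `|iota (vs n).1 (xs n)| * (2 * `|w|).
  have h4 : eps%:C * `|iota (vs n).1 (xs n)| <= `|g (xs n)| * `|iota (vs n).1 (xs n)|.
    by rewrite ler_wpM2r // ltW.
  apply: (le_trans h4); apply: (le_trans hb).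
  rewrite mulrA [_ * 2]mulrC.
  by rewrite ler_wpM2r // ltW.
rewrite mulrC ler_pM2l // in h3.
by rewrite ler_pdivrMr // mulrC.
Qed.
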